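(* Consider the distributed associative memory setting described in the context, with agents running the DAM-TOGD update, and suppose that for each agent $n$ the learning rate sequence $(\eta_{n,t})_{t\ge 1}$ is positive and non-increasing in $t$. Then the regret satisfies $$\mathrm{Reg}(T) \le \sum_{n \in \mathcal{N}} \left( Q_n \sum_{t=\tau_{n,\min}+1}^{T+\tau_{n,\max}} \eta_{n,t} + P_n\, \eta_{n,\tau_{n,\min}+1} + H_n + C_n \right),$$ where $$Q_n = \frac{K_n}{2}\sum_{m\in\mathcal{W}_n} L_m + |\mathcal{W}_n|\, K_n^2 \sum_{m\in\mathcal{W}_n}\tau_{n,m},\qquad P_n = |\mathcal{W}_n|^2 K_n^2\, \tau_{n,\max}^2,$$ $$H_n = \sum_{t=\tau_{n,\min}+1}^{T+\tau_{n,\max}} \frac{\|\mathbf{X}_{n,t}-\mathbf{U}_n^*\|^2 - \|\mathbf{X}_{n,t+1}-\mathbf{U}_n^*\|^2}{2\eta_{n,t}},\qquad C_n = \frac{\Delta\tau_n}{2}\left( K_n\sum_{m\in\mathcal{W}_n} L_m + |\mathcal{W}_n|\, B^2\right),$$ with $K_n = \max_{m\in\mathcal{W}_n} w_{n,m}L_m$, $\tau_{n,\min}=\min_{m\in\mathcal{W}_n}\tau_{n,m}$, $\tau_{n,\max}=\max_{m\in\mathcal{W}_n}\tau_{n,m}$, $\Delta\tau_n=\tau_{n,\max}-\tau_{n,\min}$, and $|\mathcal{W}_n|$ the cardinality of $\mathcal{W}_n$.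
   Context: There are $N$ agents indexed by $\mathcal{N}=\{1,\dots,N\}$. At each time $t=1,2,\dots$, agent $m$ has a convex loss function $f_{m,t}:\mathcal{X}\to\mathbb{R}$ (e.g. built from a key–value pair $(\mathbf{k}_{m,t},\mathbf{v}_{m,t})$), which only agent $m$ can evaluate. The feasible set $\mathcal{X}$ (a set of matrices) is closed, convex and bounded with diameter $B$, and $\|\nabla f_{m,t}(\mathbf{X})\|_F\le L_m$ for all $m$, $t$ and $\mathbf{X}\in\mathcal{X}$, with finite $L_m>0$. Norms $\|\cdot\|$ are Frobenius norms and $\Pi_{\mathcal{X}}$ denotes Euclidean (Frobenius) projection onto $\mathcal{X}$. A row-stochastic matrix $\mathbf{W}$ with entries $w_{n,m}\in[0,1]$, $\sum_m w_{n,m}=1$, is given; $\mathcal{W}_n=\{m\in\mathcal{N}: w_{n,m}>0\}$. Agent $n$ maintains iterates $\mathbf{X}_{n,t}\in\mathcal{X}$ and its cumulative loss is $\mathcal{L}_n^T(\mathbf{X}_n^T)=\sum_{t=1}^T\sum_{m\in\mathcal{W}_n} w_{n,m} f_{m,t}(\mathbf{X}_{n,t})$. Let $\mathbf{U}_n^*\in\arg\min_{\mathbf{U}\in\mathcal{X}}\sum_{t=1}^T\sum_{m\in\mathcal{W}_n} w_{n,m}f_{m,t}(\mathbf{U})$, and define the regret $\mathrm{Reg}(T)=\sum_{n\in\mathcal{N}}\big(\mathcal{L}_n^T(\mathbf{X}_n^T)-\mathcal{L}_n^T(\mathbf{U}_n^* )\big)$ (with $\mathcal{L}_n^T(\mathbf{U}_n^*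 )$ meaning the constant sequence $\mathbf{U}_n^*$). Agents communicate over a connected undirected graph $\mathcal{G}=(\mathcal{N},\mathcal{E})$. For each $n$, a Steiner tree $\mathcal{T}_n$ in $\mathcal{G}$ rooted at $n$ and containing paths from $n$ to every agent of $\mathcal{W}_n$ is fixed; $\tilde\tau_{n,m}$ is the number of edges on the path in $\mathcal{T}_n$ from $n$ to $m$ (so $\tilde\tau_{n,n}=0$), and $\tau_{n,m}=2\tilde\tau_{n,m}$ is the round-trip delay: each message takes one time step per edge, so agent $n$ obtains $\nabla f_{m,s}(\mathbf{X}_{n,s})$ at time $s+\tau_{n,m}$. DAM-TOGD: starting from an initial point $\mathbf{X}_{n,1}\in\mathcal{X}$, each agent $n$ updates, for $t\ge1$, $$\mathbf{X}_{n,t+1}=\Pi_{\mathcal{X}}\Big[\mathbf{X}_{n,t}-\eta_{n,t}\sum_{m\in\mathcal{W}_n} w_{n,m}\nabla f_{m,t-\tau_{n,m}}(\mathbf{X}_{n,t-\tau_{n,m}})\,\mathbb{1}_{\{t>\tau_{n,m}\}}\Big],$$ where $\eta_{n,t}>0$ is the learning rate (iterates are defined by this recursion also for $t>T$). *)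

(* Defs.v *)
From HB Require Import structures.
From mathcomp Require Import all_boot all_order all_algebra.
From mathcomp Require Import reals.
Set Implicit Arguments. Unset Strict Implicit. Unset Printing Implicit Defensive.
Import Order.TTheory GRing.Theory Num.Theory.
Local Open Scope ring_scope.

Section Defs.
Variable R : realType.
Variables p q : nat.
Local Notation M := 'M[R]_(p, q).

Definition frob_inner (A B : M) : R := \sum_(i < p) \sum_(j < q) A i j * B i j.
Definition frob (A : M) : R := Num.sqrt (frob_inner A A).

Definition mset := M -> Prop.

Definition convex_set (S : mset) : Prop :=
  forall x y, S x -> S y -> forall a : R, 0 <= a -> a <= 1 ->
    S (a *: x + (1 - a) *: y).

Definition frob_cvg (u : nat -> M) (l : M) : Prop :=
  forall e : R, 0 < e -> exists K : nat, forall k, (K <= k)%N -> frob (u k - l) < e.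
Definition closed_set (S : mset) : Prop :=
  forall (u : nat -> M) (l : M), (forall k, S (u k)) -> frob_cvg u l -> S l.

Definition diam_le (S : mset) (B : R) : Prop :=
  forall x y, S x -> S y -> frob (x - y) <= B.

Definition convex_on (S : mset) (f : M -> R) : Prop :=
  forall x y, S x -> S y -> forall a : R, 0 <= a -> a <= 1 ->
    f (a *: x + (1 - a) *: y) <= a * f x + (1 - a) * f y.

Definition is_gradient (f : M -> R) (G Y : M) : Prop :=
  forall e : R, 0 < e -> exists d : R, 0 < d /\
    forall Z, frob (Z - Y) < d ->
      `|f Z - f Y - frob_inner G (Z - Y)| <= e * frob (Z - Y).

Definition is_projection (S : mset) (P : M -> M) : Prop :=
  forall Y, S (P Y) /\ forall Z, S Z -> frob (Y - P Y) <= frob (Y - Z).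
End Defs.

Section Graphs.
Variable N : nat.
Local Notation V := 'I_N.

Definition sym_rel (E : rel V) : Prop := forall x y, E x y = E y x.

Definition simple_path (E : rel V) (x y : V) (s : seq V) : Prop :=
  path E x s /\ last x s = y /\ uniq (x :: s).

Definition acyclic (E : rel V) : Prop :=
  forall x y s1 s2, simple_path E x y s1 -> simple_path E x y s2 -> s1 = s2.

Definition steiner_tree (G T : rel V) (n : V) (W : pred V) (tt : V -> nat) : Prop :=
  subrel T G /\ sym_rel T /\ acyclic T /\
  forall m, W m -> exists s, simple_path T n m s /\ size s = tt m.
End Graphs.

(** Quantities appearing in the regret bound of DAM-TOGD. [w] is the weight
    matrix, [W n = {m | w n m > 0}], [tau n m] the round-trip delays. *)
Section Consts.
Variable R : realType.
Variable N : nat.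
Variable w : 'I_N -> 'I_N -> R.
Variable L : 'I_N -> R.
Variable tau : 'I_N -> 'I_N -> nat.

Definition Wset (n : 'I_N) : pred 'I_N := fun m => 0 < w n m.

(** K_n = max_{m in W_n} w_{n,m} L_m (all terms are nonnegative). *)
Definition Kn (n : 'I_N) : R := \big[Num.max/0]_(m | Wset n m) (w n m * L m).

(** tau_{n,max} and tau_{n,min} over the (nonempty) set W_n. The neutral
    element of the min is tau_{n,max}, which does not affect the value when
    W_n is nonempty. *)
Definition tau_max (n : 'I_N) : nat := \max_(m | Wset n m) tau n m.
Definition tau_min (n : 'I_N) : nat :=
  \big[minn/tau_max n]_(m | Wset n m) tau n m.
Definition dtau (n : 'I_N) : nat := (tau_max n - tau_min n)%N.
Definition cardW (n : 'I_N) : nat := #|Wset n|.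
Definition sumL (n : 'I_N) : R := \sum_(m | Wset n m) L m.

Definition Qn (n : 'I_N) : R :=
  Kn n / 2 * sumL n + (cardW n)%:R * Kn n ^+ 2 * (\sum_(m | Wset n m) tau n m)%:R.
Definition Pn (n : 'I_N) : R :=
  (cardW n)%:R ^+ 2 * Kn n ^+ 2 * (tau_max n)%:R ^+ 2.
Definition Cn (B : R) (n : 'I_N) : R :=
  (dtau n)%:R / 2 * (Kn n * sumL n + (cardW n)%:R * B ^+ 2).
End Consts.

(* Main.v *)
Require Import Defs.
From HB Require Import structures.
From mathcomp Require Import all_boot all_order all_algebra.
From mathcomp Require Import reals.
Import Order.TTheory GRing.Theory Num.Theory.
From mathcomp Require Import ring lra.
Set Implicit Arguments. Unset Strict Implicit. Unset Printing Implicit Defensive.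
Local Open Scope ring_scope.



Lemma ipC (R : realType) p q (A B : 'M[R]_(p, q)) : frob_inner A B = frob_inner B A.
Proof. by apply: eq_bigr => i _; apply: eq_bigr => j _; rewrite mulrC. Qed.

Lemma ipDl (R : realType) p q (A B C : 'M[R]_(p, q)) :
  frob_inner (A + B) C = frob_inner A C + frob_inner B C.
Proof.
rewrite /frob_inner -big_split; apply: eq_bigr => i _.
rewrite -big_split; apply: eq_bigr => j _; by rewrite !mxE mulrDl.
Qed.

Lemma ipZl (R : realType) p q (a : R) (A C : 'M[R]_(p, q)) :
  frob_inner (a *: A) C = a * frob_inner A C.
Proof.
rewrite /frob_inner mulr_sumr; apply: eq_bigr => i _.
rewrite mulr_sumr; apply: eq_bigr => j _; by rewrite !mxE mulrA.
Qed.

Lemma ipNl (R : realType) p q (A C : 'M[R]_(p, q)) :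
  frob_inner (- A) C = - frob_inner A C.
Proof. by rewrite -scaleN1r ipZl mulN1r. Qed.

Lemma ipBl (R : realType) p q (A B C : 'M[R]_(p, q)) :
  frob_inner (A - B) C = frob_inner A C - frob_inner B C.
Proof. by rewrite ipDl ipNl. Qed.

Lemma ipDr (R : realType) p q (A B C : 'M[R]_(p, q)) :
  frob_inner C (A + B) = frob_inner C A + frob_inner C B.
Proof. by rewrite ipC ipDl !(ipC C). Qed.

Lemma ipZr (R : realType) p q (a : R) (A C : 'M[R]_(p, q)) :
  frob_inner C (a *: A) = a * frob_inner C A.
Proof. by rewrite ipC ipZl ipC. Qed.

Lemma ipBr (R : realType) p q (A B C : 'M[R]_(p, q)) :
  frob_inner C (A - B) = frob_inner C A - frob_inner C B.
Proof. by rewrite ipC ipBl !(ipC C). Qed.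

Lemma ip0l (R : realType) p q (C : 'M[R]_(p, q)) : frob_inner 0 C = 0.
Proof. by rewrite -(scale0r 0) ipZl mul0r. Qed.

Lemma ip_suml (R : realType) p q (I : finType) (P : pred I) (F : I -> 'M[R]_(p, q)) C :
  frob_inner (\sum_(i | P i) F i) C = \sum_(i | P i) frob_inner (F i) C.
Proof.
elim/big_rec2: _ => [|i x y _ <-]; first by rewrite ip0l.
by rewrite ipDl.
Qed.

Lemma ip_ge0 (R : realType) p q (A : 'M[R]_(p, q)) : 0 <= frob_inner A A.
Proof.
by apply: sumr_ge0 => i _; apply: sumr_ge0 => j _; rewrite -expr2 sqr_ge0.
Qed.

Lemma ip_eq0 (R : realType) p q (A : 'M[R]_(p, q)) : frob_inner A A = 0 -> A = 0.
Proof.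
move=> /eqP; rewrite psumr_eq0; last by move=> i _; apply: sumr_ge0 => j _; rewrite -expr2 sqr_ge0.
move=> /allP H; apply/matrixP => i j; rewrite mxE.
have := H i (mem_index_enum _); rewrite /= psumr_eq0; last by move=> k _; rewrite -expr2 sqr_ge0.
move=> /allP /(_ j (mem_index_enum _)) /=.
by rewrite mulf_eq0 orbb => /eqP.
Qed.

Lemma frob_sq (R : realType) p q (A : 'M[R]_(p, q)) : frob A ^+ 2 = frob_inner A A.
Proof. by rewrite /frob sqr_sqrtr // ip_ge0. Qed.

Lemma frob_ge0 (R : realType) p q (A : 'M[R]_(p, q)) : 0 <= frob A.
Proof. by rewrite /frob sqrtr_ge0. Qed.

Lemma frob_le (R : realType) p q (A B : 'M[R]_(p, q)) :
  frob A <= frob B -> frob_inner A A <= frob_inner B B.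
Proof.
move=> h; rewrite -!frob_sq; have := frob_ge0 A; have := frob_ge0 B; nra.
Qed.

Lemma frob_le' (R : realType) p q (A B : 'M[R]_(p, q)) :
  frob_inner A A <= frob_inner B B -> frob A <= frob B.
Proof. by move=> h; rewrite /frob ler_sqrt // ip_ge0. Qed.

Lemma frob0 (R : realType) p q : frob (0 : 'M[R]_(p, q)) = 0.
Proof. by rewrite /frob ip0l sqrtr0. Qed.

Lemma ip_CS (R : realType) p q (A B : 'M[R]_(p, q)) :
  frob_inner A B <= frob A * frob B.
Proof.
have [a0|anz] := eqVneq (frob A) 0.
  have : frob_inner A A = 0 by rewrite -frob_sq a0 expr0n.
  by move/ip_eq0 => ->; rewrite ip0l frob0 mul0r.
have [b0|bnz] := eqVneq (frob B) 0.
  have : frob_inner B B = 0 by rewrite -frob_sq b0 expr0n.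
  by move/ip_eq0 => ->; rewrite ipC ip0l frob0 mulr0.
have ha : 0 < frob A by rewrite lt_def anz frob_ge0.
have hb : 0 < frob B by rewrite lt_def bnz frob_ge0.
have := ip_ge0 (frob B *: A - frob A *: B).
rewrite !ipBl !ipBr !ipZl !ipZr -!frob_sq (ipC B A) => h.
have hab : 0 < frob A * frob B by rewrite mulr_gt0.
rewrite -subr_ge0; rewrite -(pmulr_rge0 _ hab).
have -> : frob A * frob B * (frob A * frob B - frob_inner A B) =
  (frob B * (frob B * frob A ^+ 2) - frob B * (frob A * frob_inner A B) -
  (frob A * (frob B * frob_inner A B) - frob A * (frob A * frob B ^+ 2))) / 2.
  by field.
by rewrite divr_ge0.
Qed.

Lemma frob_sqD (R : realType) p q (A B : 'M[R]_(p, q)) :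
  frob (A + B) ^+ 2 = frob A ^+ 2 + 2 * frob_inner A B + frob B ^+ 2.
Proof. rewrite !frob_sq ipDl !ipDr (ipC B A); ring. Qed.

Lemma frobD (R : realType) p q (A B : 'M[R]_(p, q)) :
  frob (A + B) <= frob A + frob B.
Proof.
have h : frob (A + B) ^+ 2 <= (frob A + frob B) ^+ 2.
  rewrite frob_sqD; have := ip_CS A B; have := frob_ge0 A; have := frob_ge0 B; nra.
have := frob_ge0 (A + B); have := frob_ge0 A; have := frob_ge0 B; nra.
Qed.

Lemma frobZ (R : realType) p q (a : R) (A : 'M[R]_(p, q)) :
  frob (a *: A) = `|a| * frob A.
Proof.
by rewrite /frob ipZl ipZr mulrA -expr2 sqrtrM ?sqr_ge0 // sqrtr_sqr.
Qed.

Lemma frobN (R : realType) p q (A : 'M[R]_(p, q)) : frob (- A) = frob A.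
Proof. by rewrite -scaleN1r frobZ normrN1 mul1r. Qed.


Lemma frob_sum (R : realType) p q (I : finType) (P : pred I) (F : I -> 'M[R]_(p, q)) :
  frob (\sum_(i | P i) F i) <= \sum_(i | P i) frob (F i).
Proof.
elim/big_rec2: _ => [|i y x _ h]; first by rewrite frob0.
by apply: le_trans (frobD _ _) _; rewrite lerD2l.
Qed.

Lemma ip_le (R : realType) p q (A B : 'M[R]_(p, q)) :
  frob_inner A B <= frob A * frob B.
Proof. exact: ip_CS. Qed.



Lemma proj_var (R : realType) p q (Xs : 'M[R]_(p, q) -> Prop) P Y Z :
  is_projection Xs P -> convex_set Xs -> Xs Z ->
  frob_inner (Y - P Y) (Z - P Y) <= 0.
Proof.
move=> hP hC hZ; have [hPY hmin] := hP Y.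
set V := Y - P Y; set W := Z - P Y.
set c := frob_inner V W.
set D := frob_inner W W.
have hD : 0 <= D by apply: ip_ge0.
rewrite leNgt; apply/negP => hc.
set a := c / (c + D).
have hcD : 0 < c + D by lra.
have ha0 : 0 < a by rewrite divr_gt0.
have ha1 : a <= 1 by rewrite ler_pdivrMr // mul1r; lra.
have haD : a * (c + D) = c by rewrite /a mulfVK // gt_eqF.
have hZa := hC Z (P Y) hZ hPY a (ltW ha0) ha1.
have e1 : Y - (a *: Z + (1 - a) *: P Y) = V - a *: W.
  by apply/matrixP => i j; rewrite /V /W !mxE; ring.
have h0 := frob_le (hmin _ hZa); rewrite e1 in h0.
have : frob_inner V V <= frob_inner (V - a *: W) (V - a *: W) by exact h0.
clearbody V W; rewrite ipBl !ipBr !ipZl !ipZr (ipC W V) -/c -/D => h.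
have hac : 0 < a * c by rewrite mulr_gt0.
have haac : 0 < a * (a * c) by rewrite mulr_gt0.
have e2 : a * (a * D) = a * c - a * (a * c).
  by transitivity (a * (a * (c + D)) - a * (a * c)); [ring | rewrite haD].
lra.
Qed.

Lemma proj_nonexp (R : realType) p q (Xs : 'M[R]_(p, q) -> Prop) P Y Z :
  is_projection Xs P -> convex_set Xs -> Xs Z ->
  frob (P Y - Z) <= frob (Y - Z).
Proof.
move=> hP hC hZ; have hv := proj_var Y hP hC hZ.
apply: frob_le'; rewrite -!frob_sq.
rewrite (_ : P Y - Z = - (Z - P Y)); last by rewrite opprB.
rewrite (_ : Y - Z = (Y - P Y) + - (Z - P Y)); last first.
  by apply/matrixP => i j; rewrite !mxE; ring.
move: hv; move: (Y - P Y) (Z - P Y) => V W hv.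
rewrite frob_sqD frobN ipC ipNl ipC.
have := frob_ge0 V; nra.
Qed.

Lemma conv_grad (R : realType) p q (Xs : 'M[R]_(p, q) -> Prop) f G Y U :
  convex_on Xs f -> is_gradient f G Y -> Xs Y -> Xs U ->
  frob_inner G (U - Y) <= f U - f Y.
Proof.
move=> hC hG hY hU.
set F := frob (U - Y).
have hF : 0 <= F by apply: frob_ge0.
rewrite leNgt; apply/negP => hgap.
set gap := frob_inner G (U - Y) - (f U - f Y).
have hg : 0 < gap by rewrite /gap subr_gt0.
set e := gap / (2 * (F + 1)).
have he : 0 < e by rewrite divr_gt0 // mulr_gt0 //; lra.
have [d [hd hdZ]] := hG e he.
set a := d / (F + d).
have hFd : 0 < F + d by lra.
have ha0 : 0 < a by rewrite divr_gt0.
have haFd : a * (F + d) = d by rewrite /a mulfVK // gt_eqF.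
have ha1 : a <= 1 by nra.
have hZ : a *: U + (1 - a) *: Y - Y = a *: (U - Y).
  by apply/matrixP => i j; rewrite !mxE; ring.
have hfZ : frob (a *: U + (1 - a) *: Y - Y) = a * F.
  by rewrite hZ frobZ ger0_norm // ltW.
have hlt : frob (a *: U + (1 - a) *: Y - Y) < d by rewrite hfZ; nra.
have := hdZ _ hlt; rewrite hfZ hZ ipZr.
rewrite ler_norml => /andP [h1 _].
have hcv := hC U Y hU hY a (ltW ha0) ha1.
have key : 0 <= a * (f U - f Y - frob_inner G (U - Y) + e * F) by nra.
have key2 : f U - f Y - frob_inner G (U - Y) + e * F >= 0.
  by rewrite -(pmulr_rge0 _ ha0).
have heF : e * (2 * (F + 1)) = gap by rewrite /e mulfVK // gt_eqF // mulr_gt0 //; lra.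
have : e * F < gap by nra.
rewrite /gap; lra.
Qed.


Lemma sum_sub_range (R : realType) (h : nat -> R) a b c d :
  (forall i, 0 <= h i) -> (c <= a)%N -> (b <= d)%N ->
  \sum_(a <= i < b) h i <= \sum_(c <= i < d) h i.
Proof.
move=> h0 hca hbd.
have [hab|hba] := leqP a b; last first.
  rewrite big_geq ?(ltnW hba) //; apply: sumr_ge0 => i _; exact: h0.
rewrite (@big_cat_nat _ _ _ a c d) ?(leq_trans hab) //=.
rewrite (@big_cat_nat _ _ _ b a d) //=.
have s1 : 0 <= \sum_(c <= i < a) h i by apply: sumr_ge0 => i _; exact: h0.
have s2 : 0 <= \sum_(b <= i < d) h i by apply: sumr_ge0 => i _; exact: h0.
lra.
Qed.

Lemma telesc (R : realType) p q (Y : nat -> 'M[R]_(p, q)) t k :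
  Y t - Y (t + k)%N = \sum_(j < k) (Y (t + j)%N - Y (t + j).+1).
Proof.
elim: k => [|k IH]; first by rewrite big_ord0 addn0 subrr.
rewrite big_ord_recr /= -IH addnS.
by rewrite addrA subrK.
Qed.

Lemma jensen (R : realType) (I : finType) (P : pred I) (w x : I -> R) :
  (forall i, P i -> 0 <= w i) -> \sum_(i | P i) w i = 1 ->
  (\sum_(i | P i) w i * x i) ^+ 2 <= \sum_(i | P i) w i * x i ^+ 2.
Proof.
move=> hw h1.
set S := \sum_(i | P i) w i * x i.
have : 0 <= \sum_(i | P i) w i * (x i - S) ^+ 2.
  by apply: sumr_ge0 => i hi; apply: mulr_ge0; [exact: hw|exact: sqr_ge0].
rewrite (eq_bigr (fun i => w i * x i ^+ 2 - (2 * S) * (w i * x i) + S ^+ 2 * w i)); last first.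
  by move=> i _; ring.
rewrite big_split sumrB /= -!mulr_sumr h1 -/S expr2; nra.
Qed.


Lemma ipNr (R : realType) p q (A C : 'M[R]_(p, q)) :
  frob_inner C (- A) = - frob_inner C A.
Proof. by rewrite ipC ipNl ipC. Qed.

Lemma bigminn_le (I : eqType) (r : seq I) (P : pred I) (F : I -> nat) x m :
  m \in r -> P m -> (\big[minn/x]_(i <- r | P i) F i <= F m)%N.
Proof.
elim: r => [//|a r IH]; rewrite inE big_cons => /orP [/eqP <-|hm] hP.
  by rewrite hP geq_minl.
case: ifP => _; last exact: IH.
by rewrite geq_min IH ?orbT.
Qed.

Lemma agent_bound (R : realType) (p q N : nat) (Xs : 'M[R]_(p, q) -> Prop) (B : R)
  (f : 'I_N -> nat -> 'M[R]_(p, q) -> R)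
  (grad : 'I_N -> nat -> 'M[R]_(p, q) -> 'M[R]_(p, q))
  (L : 'I_N -> R) (w : 'I_N -> 'I_N -> R) (tau : 'I_N -> 'I_N -> nat)
  (proj : 'M[R]_(p, q) -> 'M[R]_(p, q)) (eta : nat -> R)
  (X : nat -> 'M[R]_(p, q)) (U : 'M[R]_(p, q)) (T : nat) (n : 'I_N) :
  convex_set Xs -> diam_le Xs B ->
  (forall m t, convex_on Xs (f m t)) ->
  (forall m t Y, Xs Y -> is_gradient (f m t) (grad m t Y) Y) ->
  (forall m, 0 < L m) ->
  (forall m t Y, Xs Y -> frob (grad m t Y) <= L m) ->
  (forall m, 0 <= w n m <= 1) ->
  \sum_(m < N) w n m = 1 ->
  is_projection Xs proj ->
  Xs (X 1%N) ->
  (forall t, (1 <= t)%N -> X t.+1 = proj (X t - eta t *: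
       \sum_(m | Wset w n m) w n m *:
          (if (tau n m < t)%N
           then grad m (t - tau n m)%N (X (t - tau n m)%N)
           else 0))) ->
  (forall t, (1 <= t)%N -> 0 < eta t) ->
  Xs U -> (0 < T)%N ->
  (\sum_(1 <= t < T.+1) \sum_(m | Wset w n m) w n m * f m t (X t)
      - \sum_(1 <= t < T.+1) \sum_(m | Wset w n m) w n m * f m t U)
  <= Qn w L tau n * \sum_((tau_min w tau n).+1 <= t < (T + tau_max w tau n).+1) eta t
     + Pn w L tau n * eta (tau_min w tau n).+1
     + \sum_((tau_min w tau n).+1 <= t < (T + tau_max w tau n).+1)
          ((frob (X t - U)) ^+ 2 - (frob (X t.+1 - U)) ^+ 2) / (2 * eta t)
     + Cn w L tau B n.
Proof.
move=> hC hdiam hconvf hgrad hL hgL hw hw1 hP hX1 hupd heta hU hT.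
pose d s := \sum_(m | Wset w n m) w n m *:
          (if (tau n m < s)%N
           then grad m (s - tau n m)%N (X (s - tau n m)%N)
           else 0).
have hupd' : forall t, (1 <= t)%N -> X t.+1 = proj (X t - eta t *: d t) by [].
clear hupd.
have hX : forall t, (1 <= t)%N -> Xs (X t).
  elim=> [//|t IH] _; case: t IH => [//|t] IH.
  by rewrite hupd' //; exact: (hP _).1.
have hw0 : forall m, 0 <= w n m by move=> m; case/andP: (hw m).
have hw1' : forall m, w n m <= 1 by move=> m; case/andP: (hw m).
set tmin := tau_min w tau n.
set tmax := tau_max w tau n.
set K := Kn w L n.
set sL := sumL w L n.
set cW := cardW w n.
set E := \sum_(tmin.+1 <= t < (T + tmax).+1) eta t.
pose S := \sum_(m | Wset w n m) w n m * L m.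
have hKm : forall m, Wset w n m -> w n m * L m <= K.
  by move=> m hm; rewrite /K /Kn; exact: le_bigmax_cond.
have hK0 : 0 <= K by rewrite /K /Kn; exact: bigmax_ge_id.
have htau : forall m, Wset w n m -> (tmin <= tau n m <= tmax)%N.
  move=> m hm; apply/andP; split.
    by rewrite /tmin /tau_min; apply: bigminn_le => //; exact: mem_index_enum.
  by rewrite /tmax /tau_max; exact: leq_bigmax_cond.
have htmm : (tmin <= tmax)%N.
  rewrite /tmin /tau_min; elim/big_ind: _ => //.
    by move=> x y hx hy; rewrite geq_min hx.
  by move=> m hm; rewrite /tmax /tau_max; exact: leq_bigmax_cond.
have hsumW : \sum_(m | Wset w n m) w n m = 1.
  rewrite -hw1 [RHS](bigID (Wset w n)) /= [X in _ = _ + X]big1 ?addr0 //.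
  move=> m /negP hm; apply/eqP; rewrite eq_le hw0 andbT leNgt; apply/negP => h.
  by apply: hm.
have hS0 : 0 <= S by apply: sumr_ge0 => m _; rewrite mulr_ge0 // ltW.
have hS1 : S <= cW%:R * K.
  apply: (@le_trans _ _ (\sum_(m | Wset w n m) K)); first by apply: ler_sum.
  have -> : \sum_(m | Wset w n m) K = K *+ cW.
    by rewrite /cW /cardW -sumr_const.
  by rewrite mulr_natl.
have hS2 : S ^+ 2 <= K * sL.
  apply: le_trans (jensen L (fun m _ => hw0 m) hsumW) _.
  rewrite /sL /sumL mulr_sumr; apply: ler_sum => m hm.
  rewrite expr2 mulrA; apply: ler_wpM2r; [exact: ltW|exact: hKm].
have hd : forall s, frob (d s) <= S.
  move=> s; apply: le_trans (frob_sum _ _) _; apply: ler_sum => m hm.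
  rewrite frobZ ger0_norm //; apply: ler_wpM2l => //.
  case: ifP => hlt; last by rewrite frob0 ltW.
  by apply: hgL; apply: hX; rewrite subn_gt0.
have hd0 : forall s, (s <= tmin)%N -> d s = 0.
  move=> s hs; apply: big1 => m hm; rewrite ifF ?scaler0 //.
  apply/negbTE; rewrite -leqNgt; apply: leq_trans hs _.
  by case/andP: (htau m hm).
have hmove : forall s, (1 <= s)%N ->
    frob (X s.+1 - X s) <= (if (tmin < s)%N then eta s * (cW%:R * K) else 0).
  move=> s hs; rewrite hupd' //.
  have := proj_nonexp (X s - eta s *: d s) hP hC (hX s hs).
  have -> : X s - eta s *: d s - X s = - (eta s *: d s) by rewrite addrAC subrr add0r.
  rewrite frobN frobZ ger0_norm; last exact: ltW (heta s hs).
  move=> h; apply: le_trans h _.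
  case: ifP => hlt.
    apply: ler_wpM2l; first exact: ltW (heta s hs).
    exact: le_trans (hd s) hS1.
  by rewrite hd0 ?frob0 ?mulr0 // leqNgt hlt.
have hOGD : forall s, (1 <= s)%N -> frob_inner (d s) (X s - U) <=
    ((frob (X s - U)) ^+ 2 - (frob (X s.+1 - U)) ^+ 2) / (2 * eta s)
    + eta s * (K * sL) / 2.
  move=> s hs.
  have h := proj_nonexp (X s - eta s *: d s) hP hC hU.
  rewrite -hupd' // in h.
  have h2 : frob (X s.+1 - U) ^+ 2 <= frob (X s - eta s *: d s - U) ^+ 2.
    have := frob_ge0 (X s.+1 - U); nra.
  have e : X s - eta s *: d s - U = (X s - U) + - (eta s *: d s).
    by rewrite addrAC.
  rewrite e [frob (X s - U - _) ^+ 2]frob_sqD frobN frobZ ger0_norm in h2; last exact: ltW (heta s hs).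
  rewrite ipNr ipZr ipC in h2.
  have he := heta s hs.
  have hD : frob (d s) ^+ 2 <= K * sL.
    apply: le_trans hS2; have := hd s; have := frob_ge0 (d s); nra.
  have key : frob_inner (d s) (X s - U) * (2 * eta s) <=
     frob (X s - U) ^+ 2 - frob (X s.+1 - U) ^+ 2 + eta s ^+ 2 * (K * sL).
    nra.
  have -> : ((frob (X s - U)) ^+ 2 - (frob (X s.+1 - U)) ^+ 2) / (2 * eta s)
    + eta s * (K * sL) / 2 =
    (frob (X s - U) ^+ 2 - frob (X s.+1 - U) ^+ 2 + eta s ^+ 2 * (K * sL)) / (2 * eta s).
    by field; rewrite gt_eqF.
  by rewrite ler_pdivlMr // mulr_gt0.
have hconv : forall t, (1 <= t)%N -> forall m, Wset w n m ->
    w n m * f m t (X t) - w n m * f m t U <=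
    w n m * frob_inner (grad m t (X t)) (X t - U).
  move=> t ht m hm; rewrite -mulrBr; apply: ler_wpM2l => //.
  have := conv_grad (hconvf m t) (hgrad m t _ (hX t ht)) (hX t ht) hU.
  rewrite -(opprB (X t) U) ipNr; lra.
pose g t m := grad m t (X t).
pose Phi m s := w n m * frob_inner (grad m (s - tau n m)%N (X (s - tau n m)%N)) (X s - U).
pose h s := if (tmin < s)%N then eta s * (cW%:R * K) else 0.
set H := \sum_(tmin.+1 <= t < (T + tmax).+1)
          ((frob (X t - U)) ^+ 2 - (frob (X t.+1 - U)) ^+ 2) / (2 * eta t).
pose OGD := \sum_(tmin.+1 <= s < (T + tmax).+1) frob_inner (d s) (X s - U).
pose Dsum := \sum_(m | Wset w n m) \sum_((T + tau n m).+1 <= s < (T + tmax).+1) Phi m s.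
pose P2 := \sum_(1 <= t < T.+1) \sum_(m | Wset w n m)
             w n m * frob_inner (g t m) (X t - X (t + tau n m)%N).
pose P1 := \sum_(1 <= t < T.+1) \sum_(m | Wset w n m) Phi m (t + tau n m)%N.
have step1 : \sum_(1 <= t < T.+1) \sum_(m | Wset w n m) w n m * f m t (X t)
      - \sum_(1 <= t < T.+1) \sum_(m | Wset w n m) w n m * f m t U <= P2 + P1.
  have -> : P2 + P1 = \sum_(1 <= t < T.+1) \sum_(m | Wset w n m)
       w n m * frob_inner (g t m) (X t - U).
    rewrite /P2 /P1 -big_split; apply: eq_bigr => t _; rewrite -big_split.
    apply: eq_bigr => m _; rewrite /Phi /g addnK /= -mulrDr -ipDr.
    by rewrite addrA subrK.
  rewrite -sumrB; apply: ler_sum_nat => t /andP [ht _]; rewrite -sumrB.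
  by apply: ler_sum => m hm; exact: hconv.
have hB : 0 <= B by have := hdiam U U hU hU; rewrite subrr frob0.
have hh0 : forall s, 0 <= h s.
  move=> s; rewrite /h; case: ifP => hs //.
  apply: mulr_ge0; first by apply: ltW; apply: heta; apply: leq_ltn_trans hs.
  by apply: mulr_ge0.
have hterm : forall t, (1 <= t)%N -> forall m, Wset w n m ->
    w n m * frob_inner (g t m) (X t - X (t + tau n m)%N)
    <= K * \sum_(j < tau n m) h (t + j)%N.
  move=> t ht m hm; rewrite telesc ipC ip_suml.
  have hle : \sum_(j < tau n m) frob_inner (X (t + j)%N - X (t + j).+1) (g t m)
      <= L m * \sum_(j < tau n m) h (t + j)%N.
    rewrite mulr_sumr; apply: ler_sum => j _.
    apply: le_trans (ip_CS _ _) _.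
    rewrite -(opprB (X (t + j).+1)) frobN mulrC.
    apply: ler_pM; [exact: frob_ge0|exact: frob_ge0| exact: hgL (hX t ht)|].
    by apply: hmove; rewrite addn_gt0 ht.
  have hsh : 0 <= \sum_(j < tau n m) h (t + j)%N by apply: sumr_ge0 => j _.
  have e1 := hKm m hm; have e2 := hw0 m.
  have e3 : w n m * (\sum_(j < tau n m) frob_inner (X (t + j)%N - X (t + j).+1) (g t m))
     <= w n m * (L m * \sum_(j < tau n m) h (t + j)%N) by apply: ler_wpM2l.
  have e4 : (w n m * L m) * \sum_(j < tau n m) h (t + j)%N <= K * \sum_(j < tau n m) h (t + j)%N.
    by apply: ler_wpM2r.
  by rewrite mulrA in e3; apply: le_trans e3 e4.
have hrange : forall j, (j <= tmax)%N ->
    \sum_(1 <= t < T.+1) h (t + j)%N <= E * (cW%:R * K).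
  move=> j hj.
  have -> : \sum_(1 <= t < T.+1) h (t + j)%N = \sum_(1 + j <= i < T.+1 + j) h i.
    by rewrite big_addn addnK.
  apply: le_trans (@sum_sub_range _ h (1 + j) (T.+1 + j) 0 (T + tmax).+1 hh0 _ _) _ => //.
    by rewrite addSn ltnS leq_add2l.
  rewrite (@big_cat_nat _ _ _ tmin.+1) //=; last first.
    by rewrite ltnS (leq_trans htmm) // leq_addl.
  rewrite big_nat_cond big1 ?add0r; last first.
    move=> i /andP [/andP [_ hi] _]; rewrite /h ifF //.
    by apply/negbTE; rewrite -leqNgt -ltnS.
  rewrite /E mulr_suml; apply: ler_sum_nat => i /andP [hi _].
  by rewrite /h hi.
have hP2 : P2 <= cW%:R * K ^+ 2 * (\sum_(m | Wset w n m) tau n m)%:R * E.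
  apply: (@le_trans _ _ (\sum_(1 <= t < T.+1) \sum_(m | Wset w n m)
      K * \sum_(j < tau n m) h (t + j)%N)).
    apply: ler_sum_nat => t /andP [ht _]; apply: ler_sum => m hm.
    exact: hterm.
  rewrite exchange_big /= natr_sum [_ * (\sum_(m | _) _)]mulr_sumr mulr_suml.
  apply: ler_sum => m hm.
  rewrite -mulr_sumr exchange_big /=.
  apply: (@le_trans _ _ (K * \sum_(j < tau n m) (E * (cW%:R * K)))).
    apply: ler_wpM2l => //; apply: ler_sum => j _; apply: hrange.
    by apply: leq_trans (ltnW (ltn_ord j)) _; case/andP: (htau m hm).
  rewrite sumr_const card_ord -mulr_natr.
  by rewrite expr2 le_eqVlt; apply/orP; left; apply/eqP; ring.
have hP1 : P1 = OGD - Dsum.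
  have hOGD' : OGD = \sum_(m | Wset w n m)
      \sum_((tau n m).+1 <= s < (T + tmax).+1) Phi m s.
    rewrite /OGD.
    transitivity (\sum_(tmin.+1 <= s < (T + tmax).+1) \sum_(m | Wset w n m)
        (if (tau n m < s)%N then Phi m s else 0)).
      apply: eq_bigr => s _; rewrite /d ip_suml; apply: eq_bigr => m _.
      rewrite ipZl; case: ifP => _ //; by rewrite ip0l mulr0.
    rewrite exchange_big /=; apply: eq_bigr => m hm.
    have [h1 h2] := andP (htau m hm).
    rewrite (@big_cat_nat _ _ _ (tau n m).+1) //=; last first.
      by rewrite ltnS (leq_trans h2) // leq_addl.
    rewrite big_nat_cond big1 ?add0r; last first.
      move=> i /andP [/andP [_ hi] _]; rewrite ifF //.
      by apply/negbTE; rewrite -leqNgt -ltnS.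
    by apply: eq_big_nat => i /andP [hi _]; rewrite hi.
  rewrite hOGD' /Dsum -sumrB /P1 exchange_big /=; apply: eq_bigr => m hm.
  have [h1 h2] := andP (htau m hm).
  have -> : \sum_(1 <= t < T.+1) Phi m (t + tau n m)%N =
      \sum_(1 + tau n m <= i < T.+1 + tau n m) Phi m i.
    by rewrite big_addn addnK.
  rewrite add1n addSn (@big_cat_nat _ _ _ (T + tau n m).+1 (tau n m).+1 (T + tmax).+1) //=.
  - by rewrite addrK.
  - by rewrite ltnS leq_addl.
  - by rewrite ltnS leq_add2l.
have hDs : - Dsum <= Cn w L tau B n.
  pose c m := (K * L m + B ^+ 2) / 2.
  apply: (@le_trans _ _ (\sum_(m | Wset w n m) c m * (dtau w tau n)%:R)).
    rewrite /Dsum -sumrN; apply: ler_sum => m hm.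
    have [h1 h2] := andP (htau m hm).
    have hc0 : 0 <= c m.
      by rewrite /c divr_ge0 // addr_ge0 ?sqr_ge0 // mulr_ge0 // ltW.
    rewrite -sumrN.
    apply: (@le_trans _ _ (\sum_((T + tau n m).+1 <= s < (T + tmax).+1) c m)).
      apply: ler_sum_nat => s /andP [hs _].
      have hs1 : (1 <= s)%N by apply: leq_trans hs.
      have hs2 : (1 <= s - tau n m)%N.
        by rewrite subn_gt0; apply: leq_trans hs; rewrite ltnS leq_addl.
      have a1 : frob_inner (grad m (s - tau n m)%N (X (s - tau n m)%N)) (U - X s)
          <= L m * B.
        apply: le_trans (ip_CS _ _) _.
        apply: ler_pM; [exact: frob_ge0|exact: frob_ge0|exact: hgL (hX _ hs2)|].
        exact: hdiam hU (hX s hs1).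
      rewrite /Phi -(opprB U (X s)) ipNr mulrN opprK.
      have a2 := ler_wpM2l (hw0 m) a1.
      have a3 := hKm m hm; have a4 := hw0 m; have a5 := hw1' m; have a6 := hL m.
      have a7 : w n m * L m <= L m by nra.
      have a8 : (w n m * L m) * (w n m * L m) <= K * L m.
        apply: ler_pM => //; rewrite mulr_ge0 // ltW //.
      have a9 : 0 <= (w n m * L m - B) ^+ 2 by apply: sqr_ge0.
      rewrite /c; nra.
    rewrite sumr_const_nat -[c m *+ _]mulr_natr; apply: ler_wpM2l => //.
    rewrite ler_nat /dtau -/tmax -/tmin.
    rewrite subSS subnDl; exact: leq_sub2l.
  have hsB : \sum_(m | Wset w n m) B ^+ 2 = B ^+ 2 *+ cW.
    by rewrite /cW /cardW -sumr_const.
  rewrite -mulr_suml /Cn -/K -/sL -/cW mulrC /c -mulr_suml big_split /=.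
  rewrite -mulr_sumr hsB /sL /sumL -[B ^+ 2 *+ cW]mulr_natr.
  by rewrite le_eqVlt; apply/orP; left; apply/eqP; field.
have hOGDb : OGD <= H + E * (K * sL) / 2.
  apply: (@le_trans _ _ (\sum_(tmin.+1 <= s < (T + tmax).+1)
     (((frob (X s - U)) ^+ 2 - (frob (X s.+1 - U)) ^+ 2) / (2 * eta s)
      + eta s * (K * sL) / 2))).
    apply: ler_sum_nat => s /andP [hs _]; apply: hOGD.
    exact: leq_trans hs.
  by rewrite big_split /= -/H -!mulr_suml.
have hPn : 0 <= Pn w L tau n * eta tmin.+1.
  apply: mulr_ge0; last by apply: ltW; apply: heta.
  by rewrite /Pn !mulr_ge0 // ?sqr_ge0.
apply: le_trans step1 _.
rewrite hP1 /Qn -/K -/sL -/cW.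
move: hP2 hOGDb hDs hPn.
set Cc := Cn w L tau B n.
set Pe := Pn w L tau n * eta tmin.+1.
set St := (\sum_(m | Wset w n m) tau n m)%:R.
move=> hP2 hOGDb hDs hPn.
have -> : (K / 2 * sL + cW%:R * K ^+ 2 * St) * E =
   E * (K * sL) / 2 + cW%:R * K ^+ 2 * St * E by field.
lra.
Qed.

Theorem theorem3
  (R : realType) (p q N : nat)
  (Xs : 'M[R]_(p, q) -> Prop) (B : R)
  (f : 'I_N -> nat -> 'M[R]_(p, q) -> R)
  (grad : 'I_N -> nat -> 'M[R]_(p, q) -> 'M[R]_(p, q))
  (L : 'I_N -> R)
  (w : 'I_N -> 'I_N -> R)
  (G : rel 'I_N) (Tr : 'I_N -> rel 'I_N) (tt : 'I_N -> 'I_N -> nat)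
  (proj : 'M[R]_(p, q) -> 'M[R]_(p, q))
  (eta : 'I_N -> nat -> R)
  (X : 'I_N -> nat -> 'M[R]_(p, q))
  (U : 'I_N -> 'M[R]_(p, q))
  (T : nat) :
  (* the feasible set: closed, convex, bounded with diameter B *)
  closed_set Xs -> convex_set Xs -> diam_le Xs B ->
  (* losses: convex on Xs, with gradients bounded by L_m > 0 *)
  (forall m t, convex_on Xs (f m t)) ->
  (forall m t Y, Xs Y -> is_gradient (f m t) (grad m t Y) Y) ->
  (forall m, 0 < L m) ->
  (forall m t Y, Xs Y -> frob (grad m t Y) <= L m) ->
  (* row-stochastic weight matrix *)
  (forall n m, 0 <= w n m <= 1) ->
  (forall n, \sum_(m < N) w n m = 1) ->
  (* connected undirected graph and Steiner trees giving the delays *)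
  sym_rel G -> (forall x, ~~ G x x) -> (forall x y, connect G x y) ->
  (forall n, steiner_tree G (Tr n) n (Wset w n) (tt n)) ->
  (* Euclidean projection onto Xs *)
  is_projection Xs proj ->
  (* DAM-TOGD, with round-trip delays tau_{n,m} = 2 * tt n m *)
  (forall n, Xs (X n 1%N)) ->
  (forall n t, (1 <= t)%N ->
     X n t.+1 = proj (X n t - eta n t *:
       \sum_(m | Wset w n m) w n m *:
          (if (2 * tt n m < t)%N
           then grad m (t - 2 * tt n m)%N (X n (t - 2 * tt n m)%N)
           else 0))) ->
  (* positive, non-increasing learning rates *)
  (forall n t, (1 <= t)%N -> 0 < eta n t) ->
  (forall n t, (1 <= t)%N -> eta n t.+1 <= eta n t) ->
  (* comparators U_n^* : minimizers of the cumulative weighted loss over Xs *)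
  (forall n, Xs (U n) /\
     forall V, Xs V ->
       \sum_(1 <= t < T.+1) \sum_(m | Wset w n m) w n m * f m t (U n)
       <= \sum_(1 <= t < T.+1) \sum_(m | Wset w n m) w n m * f m t V) ->
  (0 < T)%N ->
  let tau := fun n m => (2 * tt n m)%N in
  \sum_(n < N)
     (\sum_(1 <= t < T.+1) \sum_(m | Wset w n m) w n m * f m t (X n t)
      - \sum_(1 <= t < T.+1) \sum_(m | Wset w n m) w n m * f m t (U n))
  <= \sum_(n < N)
     ( Qn w L tau n * \sum_((tau_min w tau n).+1 <= t < (T + tau_max w tau n).+1) eta n t
     + Pn w L tau n * eta n (tau_min w tau n).+1
     + \sum_((tau_min w tau n).+1 <= t < (T + tau_max w tau n).+1)
          ((frob (X n t - U n)) ^+ 2 - (frob (X n t.+1 - U n)) ^+ 2) / (2 * eta n t)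
     + Cn w L tau B n ).
Proof.
Proof.
move=> hcl hC hdiam hconv hgrad hL hgL hw hw1 hG hirr hconn hst hP hX1 hupd heta hmono hU hT.
cbv zeta.
apply: ler_sum => n _.
exact: (@agent_bound R p q N Xs B f grad L w (fun n m => (2 * tt n m)%N) proj (eta n) (X n) (U n) T n
  hC hdiam hconv hgrad hL hgL (hw n) (hw1 n) hP (hX1 n) (hupd n) (heta n) (hU n).1 hT).
Qed.
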